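(* Let the Schreier families be the standard ones described in the context. If $\alpha$ and $\eta$ are countable ordinals with $\ell(\alpha)\le\eta$ and $m\in\mathbb{N}$, then $\mathcal{S}_\alpha[\mathcal{S}_{\omega^\eta\cdot m}]=\mathcal{S}_{\omega^\eta\cdot m+\alpha}$.
   Context: For finite $E,F\subseteq\mathbb{N}$, $E<F$ means $\max E<\min F$. $\mathcal{M}[\mathcal{N}]=\{\bigcup_{i=1}^kF_i:F_i\in\mathcal{N},F_1<\dots<F_k,\{\min F_1,\dots,\min F_k\}\in\mathcal{M}\}$. For a countable ordinal $\eta\ne0$ with Cantor normal form $\omega^{\gamma_1}k_1+\dots+\omega^{\gamma_p}k_p$ ($\gamma_1>\dots>\gamma_p$), $\ell(\eta)=\gamma_1$ (and $\ell(0)=0$). Schreier families: $\mathcal{S}_0=\{\{n\}:n\in\mathbb{N}\}\cup\{\emptyset\}$, $\mathcal{S}_1=\{F\subseteq\mathbb{N}\text{ finite}:|F|\le\min F\}$, $\mathcal{S}_{\beta+1}=\mathcal{S}_1[\mathcal{S}_\beta]$, and for a countable limit ordinal $\beta$ with associated sequence $\hat\beta_n\uparrow\beta$, $\mathcal{S}_\beta=\{F:F\in\mathcal{S}_{\hat\beta_n}\text{ for some }n\le\min F\}$. Standard choice: fix for every countable limit ordinal $\lambda$ a sequence $(\zeta_n)$ strictly increasing to $\lambda$; for a limit ordinal $\beta=\omega^{\beta_1}m_1+\dots+\omega^{\beta_k}m_k$ (Cantor normal form, $\beta_k\ge1$) set $\hat\beta_n=\omega^{\beta_1}m_1+\dots+\omega^{\beta_k}(m_k-1)+\omega^{\beta_k-1}\cdot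 n$ if $\beta_k$ is a successor, and $\hat\beta_n=\omega^{\beta_1}m_1+\dots+\omega^{\beta_k}(m_k-1)+\omega^{\zeta_n}$ if $\beta_k$ is a limit with fixed sequence $(\zeta_n)\uparrow\beta_k$. *)

(* Defs.v *)
From mathcomp Require Import all_boot.
Set Implicit Arguments. Unset Strict Implicit. Unset Printing Implicit Defensive.

Inductive bord : Type :=
| OZ : bord
| OS : bord -> bord
| OL : (nat -> bord) -> bord.   (* OL f denotes sup_n f n *)

Inductive ole : bord -> bord -> Prop :=
| ole_Z b : ole OZ b
| ole_S a b : olt a b -> ole (OS a) b
| ole_L f b : (forall n, ole (f n) b) -> ole (OL f) b
with olt : bord -> bord -> Prop :=
| olt_S a b : ole a b -> olt a (OS b)
| olt_L a g n : olt a (g n) -> olt a (OL g).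

Definition oeq (a b : bord) : Prop := ole a b /\ ole b a.

Fixpoint oadd (a b : bord) : bord :=
  match b with
  | OZ => a
  | OS b' => OS (oadd a b')
  | OL f => OL (fun n => oadd a (f n))
  end.

Fixpoint omuln (a : bord) (m : nat) : bord :=
  match m with
  | 0 => OZ
  | m'.+1 => oadd (omuln a m') a
  end.

Fixpoint wpow (b : bord) : bord :=
  match b with
  | OZ => OS OZ
  | OS b' => OL (fun n => omuln (wpow b') n)
  | OL f => OL (fun n => wpow (f n))
  end.

Definition is_limit (a : bord) : Prop :=
  ~ oeq a OZ /\ forall b, ~ oeq a (OS b).

Fixpoint valid_cnf (L : seq (bord * nat)) : Prop :=
  match L with
  | [::] => True
  | (g, k) :: L' =>
      0 < k /\ valid_cnf L' /\
      match L' with [::] => True | (g', _) :: _ => olt g' g end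
  end.

Definition cnf_eval (L : seq (bord * nat)) : bord :=
  foldr (fun p acc => oadd (omuln (wpow p.1) p.2) acc) OZ L.

Definition is_cnf (b : bord) (L : seq (bord * nat)) : Prop :=
  valid_cnf L /\ oeq (cnf_eval L) b.

(* ell a = g : leading exponent of the CNF of a (and ell 0 = 0) *)
Definition ell_is (a g : bord) : Prop :=
  exists L, is_cnf a L /\
    match L with [::] => oeq g OZ | (g1, _) :: _ => oeq g g1 end.

Definition fundamental (zeta : bord -> nat -> bord) : Prop :=
  (forall l l', oeq l l' -> forall n, oeq (zeta l n) (zeta l' n)) /\
  forall l, is_limit l ->
    (forall n, 0 < n -> olt (zeta l n) (zeta l n.+1)) /\
    (forall n, 0 < n -> olt (zeta l n) l) /\
    (forall g, olt g l -> exists n, 0 < n /\ olt g (zeta l n)).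

(* hat zeta b n g : g is the n-th term hat(b)_n of the associated sequence
   of the limit ordinal b (standard choice). *)
Definition hat (zeta : bord -> nat -> bord) (b : bord) (n : nat) (g : bord)
  : Prop :=
  exists pre bk mk,
    is_cnf b (rcons pre (bk, mk)) /\
    let d := oadd (cnf_eval pre) (omuln (wpow bk) mk.-1) in
    ((exists c, oeq bk (OS c) /\ oeq g (oadd d (omuln (wpow c) n))) \/
     (is_limit bk /\ oeq g (oadd d (wpow (zeta bk n))))).

(* A finite subset of N is represented by the strictly increasing list of
   its elements; a family is a predicate on such lists. *)
Definition S0 (F : seq nat) : Prop :=
  F = [::] \/ exists n, 0 < n /\ F = [:: n].

Definition S1 (F : seq nat) : Prop :=
  sorted ltn F /\ all (fun x => 0 < x) F /\ size F <= head 0 F.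

(* M[N]: unions F_1 u ... u F_k with F_i in N nonempty, F_1 < ... < F_k,
   and {min F_1, ..., min F_k} in M. *)
Definition bracket (M N : seq nat -> Prop) (F : seq nat) : Prop :=
  exists Fs : seq (seq nat),
    F = flatten Fs /\
    (forall i, i < size Fs -> nth [::] Fs i <> [::] /\ N (nth [::] Fs i)) /\
    sorted (fun A B => last 0 A < head 0 B) Fs /\
    M (map (head 0) Fs).

Inductive Sch (zeta : bord -> nat -> bord) : bord -> seq nat -> Prop :=
| Sch_zero a F : oeq a OZ -> S0 F -> Sch zeta a F
| Sch_succ a b F : oeq a (OS b) -> bracket S1 (Sch zeta b) F -> Sch zeta a F
| Sch_lim a n g F : is_limit a -> 0 < n -> (forall x, x \in F -> n <= x) ->
    hat zeta a n g -> Sch zeta g F -> Sch zeta a F.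

(* Main.v *)
Require Import Defs.
From mathcomp Require Import all_boot.
From Stdlib Require Import Classical IndefiniteDescription Setoid Morphisms.

Set Implicit Arguments. Unset Strict Implicit. Unset Printing Implicit Defensive.

Scheme ole_mut := Induction for ole Sort Prop
with olt_mut := Induction for olt Sort Prop.

Lemma ole_S_inv a b : ole (OS a) b -> olt a b.
Proof. intros H; inversion H; subst; auto. Qed.
Lemma ole_L_inv f b : ole (OL f) b -> forall n, ole (f n) b.
Proof. intros H; inversion H; subst; auto. Qed.
Lemma olt_S_inv a b : olt a (OS b) -> ole a b.
Proof. intros H; inversion H; subst; auto. Qed.
Lemma olt_L_inv a g : olt a (OL g) -> exists n, olt a (g n).
Proof. intros H; inversion H; subst; eauto. Qed.
Lemma olt_Z a : ~ olt a OZ.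
Proof. intros H; inversion H. Qed.

Lemma ole_OL_r a g n : ole a (g n) -> ole a (OL g).
Proof.
  revert n; induction a as [|a IH|f IH]; intros n H.
  - constructor.
  - constructor. apply ole_S_inv in H. econstructor; eauto.
  - constructor. intro k. eapply IH. eapply ole_L_inv; eauto.
Qed.

Lemma ole_refl a : ole a a.
Proof.
  induction a as [|a IH|f IH].
  - constructor.
  - constructor. constructor. auto.
  - constructor. intro n. eapply ole_OL_r; eauto.
Qed.

Lemma lt_le_W a : (forall b, olt a b -> ole a b) /\ (forall b, ole a b -> ole a (OS b)).
Proof.
  induction a as [|a IH|f IH].
  - split; intros; constructor.
  - assert (W : forall b, ole (OS a) b -> ole (OS a) (OS b)).
    { intros b H. constructor. constructor. apply (proj1 IH). apply ole_S_inv. auto. }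
    split; auto.
    intros b H. induction H.
    + apply W; auto.
    + eapply ole_OL_r; eauto.
  - assert (W : forall b, ole (OL f) b -> ole (OL f) (OS b)).
    { intros b H. constructor. intro n. apply (proj2 (IH n)). eapply ole_L_inv; eauto. }
    split; auto.
    intros b H. induction H.
    + apply W; auto.
    + eapply ole_OL_r; eauto.
Qed.

Lemma olt_ole a b : olt a b -> ole a b.
Proof. apply (proj1 (lt_le_W a)). Qed.
Lemma ole_OS_r a b : ole a b -> ole a (OS b).
Proof. apply (proj2 (lt_le_W a)). Qed.

Lemma aux_lt b c : olt b c -> forall a, (forall c', ole b c' -> ole a c') -> olt a c.
Proof.
  induction 1; intros a' Ha.
  - constructor. auto.
  - econstructor. eauto.
Qed.

Lemma trans_mut : (forall a b, ole a b -> forall c, ole b c -> ole a c) /\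
                  (forall a b, olt a b -> forall c, ole b c -> olt a c).
Proof.
  pose P := (fun (a b : bord) (_ : ole a b) => forall c, ole b c -> ole a c).
  pose P0 := (fun (a b : bord) (_ : olt a b) => forall c, ole b c -> olt a c).
  assert (H1 : forall b, P OZ b (ole_Z b)) by (intros b c _; constructor).
  assert (H2 : forall (a b : bord) (o : olt a b), P0 a b o -> P (OS a) b (ole_S o))
    by (intros a b o IH c Hc; constructor; apply IH; auto).
  assert (H3 : forall (f : nat -> bord) (b : bord) (o : forall n : nat, ole (f n) b),
        (forall n : nat, P (f n) b (o n)) -> P (OL f) b (ole_L o))
    by (intros f b o IH c Hc; constructor; intro n; apply IH; auto).
  assert (H4 : forall (a b : bord) (o : ole a b), P a b o -> P0 a (OS b) (olt_S o)).
  { intros a b o IH c Hc. apply ole_S_inv in Hc. eapply aux_lt; eauto. }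
  assert (H5 : forall (a : bord) (g : nat -> bord) (n : nat) (o : olt a (g n)),
        P0 a (g n) o -> P0 a (OL g) (olt_L o)).
  { intros a g n o IH c Hc. apply IH. eapply ole_L_inv; eauto. }
  exact (conj (@ole_mut P P0 H1 H2 H3 H4 H5) (@olt_mut P P0 H1 H2 H3 H4 H5)).
Qed.

Lemma ole_trans a b c : ole a b -> ole b c -> ole a c.
Proof. intros; eapply (proj1 trans_mut); eauto. Qed.
Lemma olt_le_trans a b c : olt a b -> ole b c -> olt a c.
Proof. intros; eapply (proj2 trans_mut); eauto. Qed.
Lemma le_lt_trans a b c : ole a b -> olt b c -> olt a c.
Proof. intros H1 H2; eapply aux_lt; eauto. intros; eapply ole_trans; eauto. Qed.
Lemma olt_trans a b c : olt a b -> olt b c -> olt a c.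
Proof. intros H1 H2; eapply olt_le_trans; eauto using olt_ole. Qed.

Lemma olt_irrefl a : ~ olt a a.
Proof.
  induction a as [|a IH|f IH]; intro H.
  - inversion H.
  - apply olt_S_inv, ole_S_inv in H. auto.
  - destruct (olt_L_inv H) as [n Hn].
    apply (IH n). eapply le_lt_trans; [|exact Hn]. eapply ole_OL_r, ole_refl.
Qed.

Lemma olt_Sa a : olt a (OS a).
Proof. constructor; apply ole_refl. Qed.
Lemma ole_OL a f n : ole a (f n) -> ole a (OL f).
Proof. apply ole_OL_r. Qed.
Lemma ole_fn f n : ole (f n) (OL f).
Proof. eapply ole_OL_r, ole_refl. Qed.
Lemma ole_SS a b : ole a b -> ole (OS a) (OS b).
Proof. intros; constructor; constructor; auto. Qed.

Lemma total_aux a : (forall b, ole a b \/ olt b a) /\ (forall b, ole b a \/ olt a b).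
Proof.
  induction a as [|a IH|f IH].
  - split; intro b; [left; constructor|].
    induction b as [|b _|g IHg].
    + left; constructor.
    + right; constructor; constructor.
    + destruct (classic (forall n, ole (g n) OZ)) as [H|H].
      * left; constructor; auto.
      * apply not_all_ex_not in H as [n Hn]. destruct (IHg n); [tauto|].
        right; econstructor; eauto.
  - assert (T1 : forall b, ole (OS a) b \/ olt b (OS a)).
    { intro b. destruct (proj2 IH b).
      - right; constructor; auto.
      - left; constructor; auto. }
    split; auto.
    intro b. induction b as [|b _|g IHg].
    + left; constructor.
    + destruct (T1 b).
      * right; constructor; auto.
      * left; constructor; auto.
    + destruct (classic (forall n, ole (g n) (OS a))) as [H|H].
      * left; constructor; auto.
      * apply not_all_ex_not in H as [n Hn]. destruct (IHg n); [tauto|].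
        right; econstructor; eauto.
  - assert (T1 : forall b, ole (OL f) b \/ olt b (OL f)).
    { intro b. destruct (classic (forall n, ole (f n) b)) as [H|H].
      - left; constructor; auto.
      - apply not_all_ex_not in H as [n Hn]. destruct (proj1 (IH n) b); [tauto|].
        right; econstructor; eauto. }
    split; auto.
    intro b. induction b as [|b _|g IHg].
    + left; constructor.
    + destruct (T1 b).
      * right; constructor; auto.
      * left; constructor; auto.
    + destruct (classic (forall n, ole (g n) (OL f))) as [H|H].
      * left; constructor; auto.
      * apply not_all_ex_not in H as [n Hn]. destruct (IHg n); [tauto|].
        right; econstructor; eauto.
Qed.

Lemma total a b : ole a b \/ olt b a.
Proof. apply (proj1 (total_aux a)). Qed.

Lemma not_ole a b : ~ ole a b -> olt b a.
Proof. destruct (total a b); tauto. Qed.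
Lemma not_olt a b : ~ olt a b -> ole b a.
Proof. destruct (total b a); tauto. Qed.
Lemma lt_le_false a b : olt a b -> ole b a -> False.
Proof. intros H1 H2. apply (olt_irrefl (olt_le_trans H1 H2)). Qed.

Lemma acc_lt b : forall a, olt a b -> Acc olt a.
Proof.
  induction b as [|b IH|g IH]; intros a H.
  - now apply olt_Z in H.
  - apply olt_S_inv in H. constructor. intros c Hc. apply IH. eapply olt_le_trans; eauto.
  - destruct (olt_L_inv H) as [n Hn]. eauto.
Qed.

Lemma wf_olt : well_founded olt.
Proof. intro a. constructor. intros y Hy. eapply acc_lt; eauto. Qed.

Lemma wf_min (P : bord -> Prop) x : P x -> exists y, P y /\ forall z, olt z y -> ~ P z.
Proof.
  intro Px. apply NNPP. intro Hn.
  assert (H : forall y, ~ P y).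
  { intro y. induction y as [y IH] using (well_founded_ind wf_olt).
    intro Py. apply Hn. exists y. split; auto. }
  exact (H x Px).
Qed.

Lemma oeq_refl a : oeq a a. Proof. split; apply ole_refl. Qed.
Lemma oeq_sym a b : oeq a b -> oeq b a. Proof. intros [? ?]; split; auto. Qed.
Lemma oeq_trans a b c : oeq a b -> oeq b c -> oeq a c.
Proof. intros [? ?] [? ?]; split; eapply ole_trans; eauto. Qed.

Add Parametric Relation : bord oeq
  reflexivity proved by oeq_refl
  symmetry proved by oeq_sym
  transitivity proved by oeq_trans as oeq_rel.

Add Parametric Morphism : ole with signature oeq ==> oeq ==> iff as ole_m.
Proof.
  intros a a' [Ha Ha'] b b' [Hb Hb']; split; intro H.
  - eapply ole_trans; [eauto|]. eapply ole_trans; eauto.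
  - eapply ole_trans; [eauto|]. eapply ole_trans; eauto.
Qed.
Add Parametric Morphism : olt with signature oeq ==> oeq ==> iff as olt_m.
Proof.
  intros a a' [Ha Ha'] b b' [Hb Hb']; split; intro H.
  - eapply le_lt_trans; [eauto|]. eapply olt_le_trans; eauto.
  - eapply le_lt_trans; [eauto|]. eapply olt_le_trans; eauto.
Qed.
Add Parametric Morphism : OS with signature oeq ==> oeq as OS_m.
Proof. intros a b [H1 H2]; split; apply ole_SS; auto. Qed.

Lemma OL_congr f g : (forall n, oeq (f n) (g n)) -> oeq (OL f) (OL g).
Proof.
  intro H; split; constructor; intro n; eapply ole_OL_r with (n := n); apply H.
Qed.

Lemma ole_antisym a b : ole a b -> ole b a -> oeq a b.
Proof. split; auto. Qed.
Lemma add_le_l a c : ole a (oadd a c).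
Proof.
  induction c as [|c IH|g IH]; simpl.
  - apply ole_refl.
  - apply ole_OS_r; auto.
  - eapply ole_OL_r with (n := 0); auto.
Qed.

Lemma le_add_r a b : ole b (oadd a b).
Proof.
  induction b as [|b IH|g IH]; simpl.
  - constructor.
  - apply ole_SS; auto.
  - constructor; intro n. eapply ole_OL_r with (n := n); auto.
Qed.

Lemma add_mono_mut a : (forall b c, ole b c -> ole (oadd a b) (oadd a c)) /\
                       (forall b c, olt b c -> olt (oadd a b) (oadd a c)).
Proof.
  pose P := (fun (b c : bord) (_ : ole b c) => ole (oadd a b) (oadd a c)).
  pose P0 := (fun (b c : bord) (_ : olt b c) => olt (oadd a b) (oadd a c)).
  assert (H1 : forall b, P OZ b (ole_Z b)) by (intros b; apply add_le_l).
  assert (H2 : forall (x b : bord) (o : olt x b), P0 x b o -> P (OS x) b (ole_S o))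
    by (intros x b o IH; simpl; constructor; apply IH).
  assert (H3 : forall (f : nat -> bord) (b : bord) (o : forall n : nat, ole (f n) b),
        (forall n : nat, P (f n) b (o n)) -> P (OL f) b (ole_L o))
    by (intros f b o IH; simpl; constructor; intro n; apply IH).
  assert (H4 : forall (x b : bord) (o : ole x b), P x b o -> P0 x (OS b) (olt_S o))
    by (intros x b o IH; simpl; constructor; apply IH).
  assert (H5 : forall (x : bord) (g : nat -> bord) (n : nat) (o : olt x (g n)),
        P0 x (g n) o -> P0 x (OL g) (olt_L o))
    by (intros x g n o IH; simpl; econstructor; apply IH).
  exact (conj (@ole_mut P P0 H1 H2 H3 H4 H5) (@olt_mut P P0 H1 H2 H3 H4 H5)).
Qed.

Lemma add_mono a b c : ole b c -> ole (oadd a b) (oadd a c).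
Proof. apply (proj1 (add_mono_mut a)). Qed.
Lemma add_smono a b c : olt b c -> olt (oadd a b) (oadd a c).
Proof. apply (proj2 (add_mono_mut a)). Qed.

Lemma add_mono_l a a' b : ole a a' -> ole (oadd a b) (oadd a' b).
Proof.
  intro H; induction b as [|b IH|g IH]; simpl; auto.
  - apply ole_SS; auto.
  - constructor; intro n. eapply ole_OL_r with (n := n); auto.
Qed.

Add Parametric Morphism : oadd with signature oeq ==> oeq ==> oeq as oadd_m.
Proof.
  intros a a' [Ha Ha'] b b' [Hb Hb']; split.
  - eapply ole_trans; [apply add_mono_l; eauto| apply add_mono; auto].
  - eapply ole_trans; [apply add_mono_l; eauto| apply add_mono; auto].
Qed.

Lemma add_assoc a b c : oeq (oadd (oadd a b) c) (oadd a (oadd b c)).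
Proof.
  induction c as [|c IH|g IH]; simpl.
  - reflexivity.
  - rewrite IH; reflexivity.
  - apply OL_congr; auto.
Qed.

Lemma add_0l a : oeq (oadd OZ a) a.
Proof.
  induction a as [|a IH|g IH]; simpl.
  - reflexivity.
  - rewrite IH; reflexivity.
  - apply OL_congr; auto.
Qed.

Lemma add_0r a : oadd a OZ = a.
Proof. reflexivity. Qed.

Lemma add_le_reflect a b c : ole (oadd a b) (oadd a c) -> ole b c.
Proof.
  intro H. destruct (total b c) as [|H']; auto.
  exfalso. eapply lt_le_false; [apply (add_smono a H')|exact H].
Qed.
Lemma add_lt_reflect a b c : olt (oadd a b) (oadd a c) -> olt b c.
Proof.
  intro H. destruct (total c b) as [H'|]; auto.
  exfalso. eapply lt_le_false; [exact H| apply add_mono; exact H'].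
Qed.
Lemma add_cancel a b c : oeq (oadd a b) (oadd a c) -> oeq b c.
Proof. intros [H1 H2]; split; eapply add_le_reflect; eauto. Qed.

Lemma sub_exists a b : ole a b -> exists d, oeq (oadd a d) b.
Proof.
  induction b as [|b IH|g IH]; intro H.
  - exists OZ. simpl. split; auto. constructor.
  - destruct (total a b) as [H1|H1].
    + destruct (IH H1) as [d Hd]. exists (OS d). simpl. rewrite Hd. reflexivity.
    + exists OZ. simpl. split; auto. constructor; auto.
  - assert (Hc : forall n, exists d, (ole a (g n) -> oeq (oadd a d) (g n)) /\
                                 (~ ole a (g n) -> d = OZ)).
    { intro n. destruct (classic (ole a (g n))) as [Hn|Hn].
      - destruct (IH n Hn) as [d Hd]. exists d. split; auto. tauto.
      - exists OZ. split; auto. tauto. }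
    pose dn := fun n => proj1_sig (constructive_indefinite_description _ (Hc n)).
    assert (Hdn : forall n, (ole a (g n) -> oeq (oadd a (dn n)) (g n)) /\
                                 (~ ole a (g n) -> dn n = OZ)).
    { intro n. exact (proj2_sig (constructive_indefinite_description _ (Hc n))). }
    exists (OL dn). simpl. split; constructor; intro n.
    + destruct (classic (ole a (g n))) as [Hn|Hn].
      * eapply ole_OL_r with (n := n). apply (proj1 (Hdn n) Hn).
      * rewrite (proj2 (Hdn n) Hn). simpl. auto.
    + destruct (classic (ole a (g n))) as [Hn|Hn].
      * eapply ole_OL_r with (n := n). apply (proj1 (Hdn n) Hn).
      * apply not_ole in Hn. eapply ole_trans; [apply olt_ole; exact Hn|].
        eapply ole_OL_r with (n := n). apply add_le_l.
Qed.

Add Parametric Morphism : omuln with signature oeq ==> eq ==> oeq as omuln_m.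
Proof.
  intros a a' H n. induction n as [|n IH]; simpl. reflexivity. rewrite IH H. reflexivity.
Qed.

Lemma omul_add a p q : oeq (omuln a (p + q)) (oadd (omuln a p) (omuln a q)).
Proof.
  induction q as [|q IH].
  - rewrite addn0. reflexivity.
  - rewrite addnS. simpl. rewrite IH. apply add_assoc.
Qed.

Lemma omul1 a : oeq (omuln a 1) a.
Proof. simpl. apply add_0l. Qed.

Lemma omul_S a n : omuln a n.+1 = oadd (omuln a n) a.
Proof. reflexivity. Qed.

Lemma omul_mono_a a a' n : ole a a' -> ole (omuln a n) (omuln a' n).
Proof.
  intro H. induction n as [|n IH]; simpl. constructor.
  eapply ole_trans; [apply add_mono_l; exact IH| apply add_mono; exact H].
Qed.

Lemma omul_le a p q : p <= q -> ole (omuln a p) (omuln a q).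
Proof.
  intro H. rewrite -(subnKC H). rewrite omul_add. apply add_le_l.
Qed.

Lemma omul_lt a p q : olt OZ a -> p < q -> olt (omuln a p) (omuln a q).
Proof.
  intros Ha H. eapply olt_le_trans; [|apply (omul_le a H)].
  rewrite omul_S. apply (add_smono (omuln a p) Ha).
Qed.
Lemma wpow_pos c : olt OZ (wpow c).
Proof.
  induction c as [|c IH|f IH]; simpl.
  - constructor; constructor.
  - apply olt_L with (n := 1). simpl. rewrite add_0l. exact IH.
  - apply olt_L with (n := 0). apply IH.
Qed.

Lemma wpow_mut : (forall b c, ole b c -> ole (wpow b) (wpow c)) /\
                 (forall b c, olt b c -> forall n, olt (omuln (wpow b) n) (wpow c)).
Proof.
  pose P := (fun (b c : bord) (_ : ole b c) => ole (wpow b) (wpow c)).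
  pose P0 := (fun (b c : bord) (_ : olt b c) => forall n, olt (omuln (wpow b) n) (wpow c)).
  assert (H1 : forall b, P OZ b (ole_Z b)) by (intros b; simpl; constructor; apply wpow_pos).
  assert (H2 : forall (x b : bord) (o : olt x b), P0 x b o -> P (OS x) b (ole_S o))
    by (intros x b o IH; simpl; constructor; intro n; apply olt_ole, IH).
  assert (H3 : forall (f : nat -> bord) (b : bord) (o : forall n : nat, ole (f n) b),
        (forall n : nat, P (f n) b (o n)) -> P (OL f) b (ole_L o))
    by (intros f b o IH; simpl; constructor; intro n; apply IH).
  assert (H4 : forall (x b : bord) (o : ole x b), P x b o -> P0 x (OS b) (olt_S o)).
  { intros x b o IH n; simpl. apply olt_L with (n := n.+1).
    eapply le_lt_trans; [apply omul_mono_a; exact IH|].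
    apply omul_lt; [apply wpow_pos| apply ltnSn]. }
  assert (H5 : forall (x : bord) (g : nat -> bord) (n : nat) (o : olt x (g n)),
        P0 x (g n) o -> P0 x (OL g) (olt_L o))
    by (intros x g n o IH k; simpl; econstructor; apply IH).
  exact (conj (@ole_mut P P0 H1 H2 H3 H4 H5) (@olt_mut P P0 H1 H2 H3 H4 H5)).
Qed.

Lemma wpow_le b c : ole b c -> ole (wpow b) (wpow c).
Proof. apply (proj1 wpow_mut). Qed.
Lemma wpow_mul_lt b c n : olt b c -> olt (omuln (wpow b) n) (wpow c).
Proof. intro H; apply (proj2 wpow_mut _ _ H). Qed.
Lemma wpow_lt b c : olt b c -> olt (wpow b) (wpow c).
Proof. intro H. rewrite -(omul1 (wpow b)). apply wpow_mul_lt; auto. Qed.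

Add Parametric Morphism : wpow with signature oeq ==> oeq as wpow_m.
Proof. intros a b [H1 H2]; split; apply wpow_le; auto. Qed.

Lemma wpow_le_reflect b c : ole (wpow b) (wpow c) -> ole b c.
Proof.
  intro H. destruct (total b c) as [|H']; auto. exfalso.
  eapply lt_le_false; [apply wpow_lt; exact H'| exact H].
Qed.
Lemma wpow_lt_reflect b c : olt (wpow b) (wpow c) -> olt b c.
Proof.
  intro H. destruct (total c b) as [H'|]; auto. exfalso.
  eapply lt_le_false; [exact H| apply wpow_le; exact H'].
Qed.

Lemma absorb c : forall x, olt x (wpow c) -> oeq (oadd x (wpow c)) (wpow c).
Proof.
  induction c as [|c IH|f IH]; intros x Hx; (split; [|apply le_add_r]); simpl.
  - simpl in Hx. apply olt_S_inv in Hx. apply ole_SS. exact Hx.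
  - simpl in Hx. destruct (olt_L_inv Hx) as [j Hj].
    constructor; intro n. apply ole_OL_r with (n := j + n).
    rewrite omul_add. apply add_mono_l. apply olt_ole; exact Hj.
  - simpl in Hx. destruct (olt_L_inv Hx) as [j Hj].
    constructor; intro n. destruct (total (f j) (f n)) as [H|H].
    + apply ole_OL_r with (n := n). apply (IH n).
      eapply olt_le_trans; [exact Hj| apply wpow_le; exact H].
    + apply ole_OL_r with (n := j).
      eapply ole_trans; [apply add_mono; apply wpow_le; apply olt_ole; exact H|].
      apply (IH j). exact Hj.
Qed.

Lemma le_wpow_self x : ole x (wpow x).
Proof.
  induction x as [|x IH|f IH].
  - constructor.
  - constructor. eapply le_lt_trans; [exact IH| apply wpow_lt, olt_Sa].
  - simpl. constructor; intro n. apply ole_OL_r with (n := n). apply IH.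
Qed.
Definition hdlt (L : seq (bord * nat)) (g : bord) : Prop :=
  match L with [::] => True | (g', _) :: _ => olt g' g end.

Lemma eval_cons g k L : cnf_eval ((g, k) :: L) = oadd (omuln (wpow g) k) (cnf_eval L).
Proof. reflexivity. Qed.

Lemma eval_lt_w L : valid_cnf L -> forall g, hdlt L g -> olt (cnf_eval L) (wpow g).
Proof.
  induction L as [|[g2 k2] L IH]; intros HV g Hg; simpl.
  - apply wpow_pos.
  - destruct HV as [Hk [HV Hh]]. simpl in Hg.
    eapply olt_trans; [| apply (wpow_mul_lt k2.+1 Hg)].
    rewrite omul_S. apply add_smono. apply IH; auto.
Qed.

Lemma eval_upper g k L : valid_cnf ((g, k) :: L) ->
  olt (cnf_eval ((g, k) :: L)) (omuln (wpow g) k.+1).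
Proof.
  intros [Hk [HV Hh]]. rewrite eval_cons omul_S. apply add_smono.
  apply eval_lt_w; auto.
Qed.

Lemma eval_lower g k L : ole (omuln (wpow g) k) (cnf_eval ((g, k) :: L)).
Proof. apply add_le_l. Qed.

Lemma eval_ge_w g k L : valid_cnf ((g, k) :: L) -> ole (wpow g) (cnf_eval ((g, k) :: L)).
Proof.
  intros [Hk _]. eapply ole_trans; [|apply eval_lower].
  rewrite -{1}(omul1 (wpow g)). apply omul_le. exact Hk.
Qed.

Lemma eval_lt_S g k L : valid_cnf ((g, k) :: L) -> olt (cnf_eval ((g, k) :: L)) (wpow (OS g)).
Proof.
  intro H. eapply olt_trans; [apply (eval_upper H)|]. apply wpow_mul_lt, olt_Sa.
Qed.

Lemma eval_pos g k L : valid_cnf ((g, k) :: L) -> olt OZ (cnf_eval ((g, k) :: L)).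
Proof. intro H. eapply olt_le_trans; [apply wpow_pos| apply eval_ge_w; auto]. Qed.

Fixpoint cnf_eq (L L' : seq (bord * nat)) : Prop :=
  match L, L' with
  | [::], [::] => True
  | p :: L1, p' :: L1' => oeq p.1 p'.1 /\ p.2 = p'.2 /\ cnf_eq L1 L1'
  | _, _ => False
  end.

Lemma oeq_lt_false a b : oeq a b -> olt a b -> False.
Proof. intros [H1 H2] H. eapply lt_le_false; eauto. Qed.

Lemma cnf_unique L : valid_cnf L -> forall L', valid_cnf L' ->
  oeq (cnf_eval L) (cnf_eval L') -> cnf_eq L L'.
Proof.
  induction L as [|[g k] L IH]; intros HV [|[g' k'] L'] HV' He; simpl; auto.
  - exfalso. apply (oeq_lt_false He). apply eval_pos; auto.
  - exfalso. apply (oeq_lt_false (oeq_sym He)). apply eval_pos; auto.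
  - assert (Hg : oeq g g').
    { split.
      - destruct (total g g') as [|H]; auto. exfalso.
        apply (oeq_lt_false (oeq_sym He)).
        eapply olt_le_trans; [apply (eval_lt_S HV')|].
        eapply ole_trans; [apply wpow_le; constructor; exact H| apply eval_ge_w; auto].
      - destruct (total g' g) as [|H]; auto. exfalso.
        apply (oeq_lt_false He).
        eapply olt_le_trans; [apply (eval_lt_S HV)|].
        eapply ole_trans; [apply wpow_le; constructor; exact H| apply eval_ge_w; auto]. }
    assert (Hk : k = k').
    { destruct (ltngtP k k') as [H|H|H]; auto; exfalso.
      - apply (oeq_lt_false He).
        eapply olt_le_trans; [apply (eval_upper HV)|].
        eapply ole_trans; [|apply eval_lower]. rewrite Hg. apply omul_le. exact H.
      - apply (oeq_lt_false (oeq_sym He)).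
        eapply olt_le_trans; [apply (eval_upper HV')|].
        eapply ole_trans; [|apply eval_lower]. rewrite -Hg. apply omul_le. exact H. }
    subst k'. split; auto. split; auto.
    destruct HV as [_ [HV _]]. destruct HV' as [_ [HV' _]].
    apply IH; auto. rewrite !eval_cons in He. rewrite Hg in He.
    eapply add_cancel; eauto.
Qed.

Lemma cnf_eq_eval L L' : cnf_eq L L' -> oeq (cnf_eval L) (cnf_eval L').
Proof.
  revert L'; induction L as [|[g k] L IH]; intros [|[g' k'] L'] H; simpl in *;
    try tauto; try reflexivity.
  destruct H as [H1 [H2 H3]]. subst k'. rewrite H1 (IH _ H3). reflexivity.
Qed.

Lemma cnf_eq_rcons pre x L' : cnf_eq (rcons pre x) L' ->
  exists pre' x', L' = rcons pre' x' /\ cnf_eq pre pre' /\ oeq x.1 x'.1 /\ x.2 = x'.2.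
Proof.
  revert L'; induction pre as [|p pre IH]; intros [|p' L'] H; simpl in *; try tauto.
  - destruct H as [H1 [H2 H3]]. destruct L'; simpl in H3; try tauto.
    exists [::], p'. simpl. auto.
  - destruct H as [H1 [H2 H3]]. destruct (IH _ H3) as [pre' [x' [E [Hp [Hx1 Hx2]]]]].
    exists (p' :: pre'), x'. rewrite E. simpl. auto.
Qed.

Lemma eval_rcons pre x :
  oeq (cnf_eval (rcons pre x)) (oadd (cnf_eval pre) (omuln (wpow x.1) x.2)).
Proof.
  induction pre as [|[g k] pre IH]; simpl.
  - symmetry. apply add_0l.
  - rewrite IH. symmetry. apply add_assoc.
Qed.

Lemma nat_min (P : nat -> Prop) n : P n -> exists i, P i /\ forall j, j < i -> ~ P j.
Proof.
  intro Pn. apply NNPP. intro Hn.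
  assert (H : forall n k, k <= n -> ~ P k).
  { intro n0; induction n0 as [|n0 IH]; intros k Hk Pk.
    - rewrite leqn0 in Hk. move/eqP: Hk => Hk. subst k. apply Hn. exists 0. split; [exact Pk|].
      intros j Hj. by [].
    - rewrite leq_eqVlt in Hk. case/orP: Hk => [/eqP Hk|Hk].
      + subst k. apply Hn. exists n0.+1. split; [exact Pk|]. intros j Hj. apply IH. exact Hj.
      + apply (IH k); [exact Hk| exact Pk]. }
  exact (H n n (leqnn n) Pn).
Qed.

Lemma min_exp_succ a : forall gam, olt a (wpow gam) ->
  (forall z, olt z gam -> ~ olt a (wpow z)) -> oeq a OZ \/ exists c, oeq gam (OS c).
Proof.
  induction gam as [|c _|f IH]; intros H Hmin.
  - left. simpl in H. apply olt_S_inv in H. split; auto. constructor.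
  - right. exists c. reflexivity.
  - simpl in H. destruct (olt_L_inv H) as [n Hn].
    destruct (total (OL f) (f n)) as [H1|H1].
    + assert (E : oeq (f n) (OL f)) by (split; auto; apply ole_fn).
      destruct (IH n Hn) as [|[c Hc]]; auto.
      * intros z Hz. apply Hmin. eapply olt_le_trans; eauto. apply ole_fn.
      * right. exists c. rewrite -E. exact Hc.
    + exfalso. exact (Hmin _ H1 Hn).
Qed.

Lemma cnf_exists a : exists L, is_cnf a L.
Proof.
  induction a as [a IH] using (well_founded_ind wf_olt).
  destruct (classic (oeq a OZ)) as [H0|H0].
  { exists [::]. split; simpl; auto. symmetry; auto. }
  assert (Pa : olt a (wpow (OS a))).
  { eapply le_lt_trans; [apply le_wpow_self| apply wpow_lt, olt_Sa]. }
  destruct (@wf_min (fun gam => olt a (wpow gam)) _ Pa) as [gam [Hg Hmin]].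
  destruct (min_exp_succ Hg Hmin) as [|[c Hc]]; [tauto|].
  assert (Hca : ole (wpow c) a).
  { apply not_olt. apply Hmin. rewrite Hc. apply olt_Sa. }
  rewrite Hc in Hg. simpl in Hg. destruct (olt_L_inv Hg) as [j Hj].
  destruct (@nat_min (fun j => olt a (omuln (wpow c) j)) _ Hj) as [j' [Hj' Hmj]].
  destruct j' as [|k].
  { simpl in Hj'. exfalso; exact (olt_Z Hj'). }
  assert (Hk : ole (omuln (wpow c) k) a).
  { apply not_olt. apply Hmj. apply ltnSn. }
  assert (Hk0 : 0 < k).
  { destruct k as [|k]; auto. exfalso. rewrite omul1 in Hj'.
    eapply lt_le_false; eauto. }
  destruct (sub_exists Hk) as [d Hd].
  assert (Hdc : olt d (wpow c)).
  { apply not_ole. intro H. rewrite omul_S in Hj'.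
    eapply lt_le_false; [exact Hj'|]. rewrite -Hd. apply add_mono. exact H. }
  assert (Hda : olt d a) by (eapply olt_le_trans; eauto).
  destruct (IH d Hda) as [Ld [HVd Hed]].
  exists ((c, k) :: Ld). split.
  - simpl. split; auto. split; auto.
    destruct Ld as [|[g2 k2] Ld']; auto.
    apply wpow_lt_reflect. eapply le_lt_trans; [|exact Hdc].
    rewrite -Hed. apply eval_ge_w; auto.
  - rewrite eval_cons Hed. exact Hd.
Qed.

Lemma ell_bound alpha eta : (forall g, ell_is alpha g -> ole g eta) ->
  olt alpha (wpow (OS eta)).
Proof.
  intro H. destruct (cnf_exists alpha) as [L [HV He]].
  destruct L as [|[g k] L].
  - simpl in He. rewrite -He. apply wpow_pos.
  - assert (Hg : ole g eta).
    { apply H. exists ((g, k) :: L). split; [split; auto| reflexivity]. }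
    rewrite -He. eapply olt_le_trans; [apply eval_lt_S; auto|].
    apply wpow_le, ole_SS, Hg.
Qed.
Definition dval (pre : seq (bord * nat)) bk mk :=
  oadd (cnf_eval pre) (omuln (wpow bk) mk.-1).

Definition hcondd (zeta : bord -> nat -> bord) d bk n g : Prop :=
  (exists c, oeq bk (OS c) /\ oeq g (oadd d (omuln (wpow c) n))) \/
  (is_limit bk /\ oeq g (oadd d (wpow (zeta bk n)))).

Lemma hat_iff zeta b n g : hat zeta b n g <->
  exists pre bk mk, is_cnf b (rcons pre (bk, mk)) /\ hcondd zeta (dval pre bk mk) bk n g.
Proof. split; intro H; exact H. Qed.

Lemma is_limit_congr a b : oeq a b -> is_limit a -> is_limit b.
Proof.
  intros E [H1 H2]. split.
  - intro H. apply H1. rewrite E. exact H.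
  - intros c H. apply (H2 c). rewrite E. exact H.
Qed.

Lemma hcondd_congr zeta d d' bk bk' n g g' : fundamental zeta ->
  oeq d d' -> oeq bk bk' -> oeq g g' -> hcondd zeta d bk n g -> hcondd zeta d' bk' n g'.
Proof.
  intros Hz Ed Eb Eg [[c [Hc Hg]]|[Hl Hg]].
  - left. exists c. split. rewrite -Eb. exact Hc. rewrite -Eg -Ed. exact Hg.
  - right. split. eapply is_limit_congr; eauto.
    rewrite -Eg -Ed Hg. rewrite ((proj1 Hz) _ _ Eb n). reflexivity.
Qed.

Lemma hat_intro zeta b pre bk mk n g : is_cnf b (rcons pre (bk, mk)) ->
  hcondd zeta (dval pre bk mk) bk n g -> hat zeta b n g.
Proof. intros H1 H2. apply hat_iff. exists pre, bk, mk. auto. Qed.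

Lemma hat_char zeta b L n g : fundamental zeta -> is_cnf b L -> hat zeta b n g ->
  exists pre bk mk, L = rcons pre (bk, mk) /\ hcondd zeta (dval pre bk mk) bk n g.
Proof.
  intros Hz [HV He] H. apply hat_iff in H. destruct H as [pre [bk [mk [[HV' He'] Hc]]]].
  have Hq : cnf_eq (rcons pre (bk, mk)) L.
  { apply cnf_unique; auto. rewrite He' He. reflexivity. }
  destruct (cnf_eq_rcons Hq) as [pre' [[bk' mk'] [E [Hp [Hx1 Hx2]]]]].
  simpl in Hx1, Hx2. subst mk'. exists pre', bk', mk. split; auto.
  eapply hcondd_congr; eauto; [|reflexivity].
  rewrite /dval (cnf_eq_eval Hp) Hx1. reflexivity.
Qed.

Lemma hcondd_shift zeta X d bk n g : fundamental zeta ->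
  hcondd zeta (oadd X d) bk n g <-> exists g', hcondd zeta d bk n g' /\ oeq g (oadd X g').
Proof.
  intro Hz. split.
  - intros [[c [Hc Hg]]|[Hl Hg]].
    + exists (oadd d (omuln (wpow c) n)). split.
      * left. exists c. split; auto. reflexivity.
      * rewrite Hg. apply add_assoc.
    + exists (oadd d (wpow (zeta bk n))). split.
      * right. split; auto. reflexivity.
      * rewrite Hg. apply add_assoc.
  - intros [g' [H Hg]]. destruct H as [[c [Hc Hg']]|[Hl Hg']].
    + left. exists c. split; auto. rewrite Hg Hg'. symmetry. apply add_assoc.
    + right. split; auto. rewrite Hg Hg'. symmetry. apply add_assoc.
Qed.

Lemma valid_rcons_pos pre bk mk : valid_cnf (rcons pre (bk, mk)) -> 0 < mk.
Proof.
  induction pre as [|[g k] pre IH]; simpl.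
  - tauto.
  - intros [_ [H _]]. auto.
Qed.

Lemma hat_lt zeta a n g : fundamental zeta -> 0 < n -> hat zeta a n g -> olt g a.
Proof.
  intros Hz Hn H. apply hat_iff in H. destruct H as [pre [bk [mk [[HV He] Hc]]]].
  have Hmk := valid_rcons_pos HV.
  have Ea : oeq a (oadd (dval pre bk mk) (wpow bk)).
  { rewrite -He eval_rcons /= /dval. rewrite add_assoc.
    destruct mk as [|mk]; [by []|]. simpl. reflexivity. }
  rewrite Ea. destruct Hc as [[c [Hc Hg]]|[Hl Hg]]; rewrite Hg; apply add_smono.
  - rewrite Hc. apply wpow_mul_lt, olt_Sa.
  - apply wpow_lt. apply (proj2 Hz bk Hl). exact Hn.
Qed.

Lemma nonempty_rcons (L : seq (bord * nat)) x L1 : L = x :: L1 ->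
  exists pre bk mk, L = rcons pre (bk, mk).
Proof.
  intro E. subst L. rewrite lastI. destruct (last x L1) as [bk mk].
  exists (belast x L1), bk, mk. reflexivity.
Qed.

Lemma cnf_shift eta m g1 k1 L1 : 0 < m -> valid_cnf ((g1, k1) :: L1) -> ole g1 eta ->
  exists Ls, valid_cnf Ls /\
    oeq (cnf_eval Ls) (oadd (omuln (wpow eta) m) (cnf_eval ((g1, k1) :: L1))) /\
    forall pre bk mk, (g1, k1) :: L1 = rcons pre (bk, mk) ->
      exists pre' mk', Ls = rcons pre' (bk, mk') /\
        oeq (dval pre' bk mk') (oadd (omuln (wpow eta) m) (dval pre bk mk)).
Proof.
  intros Hm HV Hle.
  destruct (total eta g1) as [Hge|Hlt].
  - have Hg : oeq g1 eta := conj Hle Hge.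
    exists ((g1, m + k1) :: L1). destruct HV as [Hk1 [HV1 Hh]]. split; [|split].
    + simpl. split; [by rewrite addn_gt0 Hm|]. split; auto.
    + rewrite /= omul_add add_assoc Hg. reflexivity.
    + intros pre bk mk E. destruct pre as [|p pre].
      * simpl in E. case: E => E1 E2 E3. subst g1 k1 L1.
        exists [::], (m + mk). split; auto.
        rewrite /dval /= !add_0l. destruct mk as [|mk]; [by []|].
        rewrite addnS /= omul_add Hg. reflexivity.
      * simpl in E. case: E => Ep EL. subst p L1.
        exists ((g1, m + k1) :: pre), mk. split; auto.
        rewrite /dval /= omul_add !add_assoc Hg. reflexivity.
  - exists ((eta, m) :: (g1, k1) :: L1). split; [|split].
    + simpl. split; auto.
    + apply oeq_refl.
    + intros pre bk mk E. exists ((eta, m) :: pre), mk. split.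
      * by rewrite E.
      * rewrite /dval /= add_assoc. reflexivity.
Qed.

Lemma hat_shift zeta eta m alpha : fundamental zeta -> 0 < m -> ~ oeq alpha OZ ->
  olt alpha (wpow (OS eta)) -> forall n g,
  hat zeta (oadd (omuln (wpow eta) m) alpha) n g <->
  exists g', hat zeta alpha n g' /\ oeq g (oadd (omuln (wpow eta) m) g').
Proof.
  intros Hz Hm H0 Hlt n g.
  destruct (cnf_exists alpha) as [L [HV He]].
  destruct L as [|[g1 k1] L1].
  { exfalso. apply H0. rewrite -He. reflexivity. }
  have Hle : ole g1 eta.
  { apply olt_S_inv. apply wpow_lt_reflect. eapply le_lt_trans; [|exact Hlt].
    rewrite -He. apply eval_ge_w; auto. }
  destruct (cnf_shift Hm HV Hle) as [Ls [HVs [Hes Hdec]]].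
  have Hcs : is_cnf (oadd (omuln (wpow eta) m) alpha) Ls.
  { split; auto. rewrite Hes He. reflexivity. }
  split.
  - intro H. destruct (hat_char Hz Hcs H) as [pre' [bk' [mk' [E' Hc']]]].
    destruct (nonempty_rcons (erefl ((g1, k1) :: L1))) as [pre [bk [mk E]]].
    destruct (Hdec _ _ _ E) as [pre2 [mk2 [E2 Hd2]]].
    rewrite E2 in E'. apply rcons_inj in E'. case: E' => Ep Eb Em. subst pre' bk' mk'.
    have Hc2 := hcondd_congr Hz Hd2 (oeq_refl bk) (oeq_refl g) Hc'.
    apply (hcondd_shift _ _ _ _ _ Hz) in Hc2. destruct Hc2 as [g' [Hc3 Hg']].
    exists g'. split; auto. eapply hat_intro; [|exact Hc3]. rewrite -E. split; auto.
  - intros [g' [H Hg]]. destruct (hat_char Hz (conj HV He) H) as [pre [bk [mk [E Hc]]]].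
    destruct (Hdec _ _ _ E) as [pre2 [mk2 [E2 Hd2]]].
    apply hat_intro with (pre := pre2) (bk := bk) (mk := mk2); [rewrite -E2; exact Hcs|].
    eapply hcondd_congr; [exact Hz| symmetry; exact Hd2| reflexivity| reflexivity|].
    apply (hcondd_shift _ _ _ _ _ Hz). exists g'. auto.
Qed.

Lemma hat_exists zeta a : fundamental zeta -> is_limit a -> exists g, hat zeta a 1 g.
Proof.
  intros Hz Hl. destruct (cnf_exists a) as [L [HV He]].
  destruct L as [|x L1].
  { exfalso. apply (proj1 Hl). rewrite -He. reflexivity. }
  destruct (nonempty_rcons (erefl (x :: L1))) as [pre [bk [mk E]]].
  rewrite E in HV He. have Hmk := valid_rcons_pos HV.
  destruct (classic (oeq bk OZ)) as [Hb|Hb].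
  { exfalso. apply (proj2 Hl (oadd (cnf_eval pre) (omuln (wpow OZ) mk.-1))).
    rewrite -He eval_rcons /= Hb. destruct mk as [|mk]; [by []|]. simpl. reflexivity. }
  destruct (classic (exists c, oeq bk (OS c))) as [[c Hc]|Hnc].
  - exists (oadd (dval pre bk mk) (omuln (wpow c) 1)).
    eapply hat_intro; [split; eauto|]. left. exists c. split; auto. reflexivity.
  - exists (oadd (dval pre bk mk) (wpow (zeta bk 1))).
    eapply hat_intro; [split; eauto|]. right. split; [|reflexivity].
    split; auto. intros c Hc. apply Hnc. exists c. exact Hc.
Qed.
Definition bracket' (M N : seq nat -> Prop) (F : seq nat) : Prop :=
  exists Fs : seq (seq nat), F = flatten Fs /\
    (forall A, A \in Fs -> A <> [::] /\ N A) /\ sorted ltn F /\ M (map (head 0) Fs).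

Lemma nth_mem_iff (P : seq nat -> Prop) (Fs : seq (seq nat)) :
  (forall i, i < size Fs -> P (nth [::] Fs i)) <-> (forall A, A \in Fs -> P A).
Proof.
  split.
  - intros H A HA. rewrite -(nth_index [::] HA). apply H. by rewrite index_mem.
  - intros H i Hi. apply H. by apply mem_nth.
Qed.

Lemma sorted_cat_ne (A C : seq nat) : A <> [::] -> C <> [::] ->
  sorted ltn (A ++ C) = [&& sorted ltn A, last 0 A < head 0 C & sorted ltn C].
Proof.
  destruct A as [|a A]; [done|]. destruct C as [|c C]; [done|]. intros _ _.
  by rewrite /= cat_path /=.
Qed.

Lemma sorted_blocks (Fs : seq (seq nat)) :
  (forall A, A \in Fs -> A <> [::] /\ sorted ltn A) ->
  sorted (fun A B => last 0 A < head 0 B) Fs = sorted ltn (flatten Fs).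
Proof.
  induction Fs as [|A Fs IH]; intro H; [done|].
  have [HA HsA] := H A (mem_head _ _).
  destruct Fs as [|B Fs'].
  - by rewrite /= cats0 HsA.
  - have HBin : B \in A :: B :: Fs' by rewrite inE mem_head orbT.
    have [HB _] := H B HBin.
    have IH' : sorted (fun A B => last 0 A < head 0 B) (B :: Fs') = sorted ltn (flatten (B :: Fs')).
    { apply IH. intros X HX. apply H. by rewrite inE HX orbT. }
    change (flatten (A :: B :: Fs')) with (A ++ flatten (B :: Fs')).
    rewrite sorted_cat_ne //; last by destruct B.
    rewrite HsA -IH'. destruct B as [|b B]; [done|]. by [].
Qed.

Lemma bracket_iff M N F : (forall A, N A -> sorted ltn A) ->
  bracket M N F <-> bracket' M N F.
Proof.
  intro HN. split.
  - intros [Fs [eF [HB [Hs HM]]]]. exists Fs.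
    have HB' := proj1 (nth_mem_iff (fun A => A <> [::] /\ N A) Fs) HB.
    split; auto. split; auto. split; auto. rewrite eF -sorted_blocks; auto.
    intros A HA. have [? ?] := HB' A HA. auto.
  - intros [Fs [eF [HB [Hs HM]]]]. exists Fs. split; auto. split.
    + apply (proj2 (nth_mem_iff (fun A => A <> [::] /\ N A) Fs)). auto.
    + split; auto. rewrite sorted_blocks; [by rewrite -eF|].
      intros A HA. have [? ?] := HB A HA. auto.
Qed.

Definition pos_all (F : seq nat) := all (fun x => 0 < x) F.

Lemma bracket_sp M F :
  bracket M (fun A => sorted ltn A /\ pos_all A) F -> sorted ltn F /\ pos_all F.
Proof.
  intros [Fs [eF [HB [Hs HM]]]].
  have HB' := proj1 (nth_mem_iff (fun A => A <> [::] /\ (sorted ltn A /\ pos_all A)) Fs) HB.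
  split.
  - rewrite eF -sorted_blocks; auto. intros A HA. have [? [? ?]] := HB' A HA. auto.
  - apply/allP => x. rewrite eF => /flattenP [A HA Hx].
    have [_ [_ Hp]] := HB' A HA. exact: (allP Hp x Hx).
Qed.

Lemma S0_sp F : S0 F -> sorted ltn F /\ pos_all F.
Proof. intros [->|[n [Hn ->]]]; by rewrite /pos_all /= ?Hn. Qed.

Fixpoint Sch_sp zeta a F (H : Sch zeta a F) {struct H} : sorted ltn F /\ pos_all F :=
  match H with
  | Sch_zero _ _ _ h0 => S0_sp h0
  | Sch_succ _ _ _ _ hb => bracket_sp
      (match hb with
       | ex_intro Fs (conj eF (conj HN rest)) =>
           ex_intro _ Fs (conj eF (conj (fun i hi => match HN i hi with
                                       | conj ne hs => conj ne (Sch_sp hs) end) rest))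
       end)
  | Sch_lim _ _ _ _ _ _ _ _ hs => Sch_sp hs
  end.

Lemma Sch_sorted zeta a F : Sch zeta a F -> sorted ltn F.
Proof. intro H. exact (proj1 (Sch_sp H)). Qed.

Lemma Sch_oeq zeta a b F : oeq a b -> Sch zeta a F -> Sch zeta b F.
Proof.
  intros E H. destruct H as [a F H0 HS|a c F Hc HB|a n g F Hl Hn Hx Hh Hs].
  - apply Sch_zero; auto. rewrite -E. exact H0.
  - eapply Sch_succ; eauto. rewrite -E. exact Hc.
  - eapply Sch_lim; eauto. eapply is_limit_congr; eauto.
    apply hat_iff in Hh. destruct Hh as [pre [bk [mk [[HV He] Hc]]]].
    apply hat_iff. exists pre, bk, mk. split; auto. split; auto. rewrite He E. reflexivity.
Qed.

Lemma Sch_nil zeta : fundamental zeta -> forall a, Sch zeta a [::].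
Proof.
  intros Hz a. induction a as [a IH] using (well_founded_ind wf_olt).
  destruct (classic (oeq a OZ)) as [H0|H0].
  { apply Sch_zero; auto. left; auto. }
  destruct (classic (exists b, oeq a (OS b))) as [[b Hb]|Hb].
  { eapply Sch_succ; [exact Hb|]. exists [::]. split; [done|]. split; [by []|].
    split; [done|]. by rewrite /S1. }
  have Hl : is_limit a.
  { split; auto. intros b H. apply Hb. exists b. exact H. }
  destruct (hat_exists Hz Hl) as [g Hg].
  apply (@Sch_lim zeta a 1 g); [exact Hl| done| by [] | exact Hg|]. apply IH. exact (@hat_lt zeta a 1 g Hz isT Hg).
Qed.

Lemma bracket'_mono (M M' N N' : seq nat -> Prop) F :
  (forall A, N A -> N' A) -> (forall G, M G -> M' G) -> bracket' M N F -> bracket' M' N' F.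
Proof.
  intros HN HM [Fs [eF [HB [Hs HMF]]]]. exists Fs. split; auto. split; auto.
  intros A HA. have [? ?] := HB A HA. auto.
Qed.

Lemma subseq_flatten (X : seq nat) ss : X \in ss -> subseq X (flatten ss).
Proof.
  induction ss as [|Y ss IH]; [done|]. rewrite inE => /orP [/eqP ->|H] /=.
  - apply prefix_subseq.
  - eapply subseq_trans; [apply IH; exact H| apply suffix_subseq].
Qed.

Lemma heads_subseq (Hs : seq (seq nat)) : (forall X, X \in Hs -> X <> [::]) ->
  subseq (map (head 0) Hs) (flatten Hs).
Proof.
  induction Hs as [|X Hs IH]; intro H; [done|].
  destruct X as [|x X]; [by case: (H _ (mem_head _ _))|].
  rewrite /= eqxx. eapply subseq_trans; [|apply suffix_subseq].
  apply IH. intros Y HY. apply H. by rewrite inE HY orbT.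
Qed.

Lemma heads_eq (H : seq (seq nat)) : (forall X, X \in H -> X <> [::]) ->
  head 0 (flatten H) = head 0 (map (head 0) H).
Proof.
  destruct H as [|X H]; [done|]. intro HX.
  destruct X as [|x X]; [by case: (HX _ (mem_head _ _))|]. by [].
Qed.

Lemma flatten_map_flatten (sss : seq (seq (seq nat))) :
  flatten (map flatten sss) = flatten (flatten sss).
Proof. induction sss as [|s sss IH]; [done|]. by rewrite /= flatten_cat IH. Qed.

Lemma assoc1 (M N P : seq nat -> Prop) F :
  bracket' (bracket' M N) P F -> bracket' M (bracket' N P) F.
Proof.
  intros [Hs [eF [HB [Hsort [Es [eE [HE [HsE HM]]]]]]]].
  pose HsG := reshape (shape Es) Hs.
  have E1 : flatten HsG = Hs.
  { apply reshapeKr. by rewrite -size_flatten -eE size_map. }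
  have E2 : map (map (head 0)) HsG = Es.
  { by rewrite /HsG map_reshape eE flattenK. }
  have HHs : forall H, H \in HsG -> H <> [::] /\ (forall X, X \in H -> X <> [::] /\ P X)
                                     /\ N (map (head 0) H).
  { intros H HH. have HE' : map (head 0) H \in Es by rewrite -E2; apply map_f.
    have [Hne HN] := HE _ HE'. split; [by destruct H|]. split; auto.
    intros X HX. apply HB. rewrite -E1. apply/flattenP. exists H; auto. }
  exists (map flatten HsG). split; [by rewrite flatten_map_flatten E1|]. split; [|split; auto].
  - intros G HG. case/mapP: HG => H HH ->. have [Hne [HX HN]] := HHs H HH. split.
    + destruct H as [|X H]; [done|]. have [HXn _] := HX X (mem_head _ _).
      destruct X; [done|]. by [].
    + exists H. split; auto. split.
      * intros X HXH. exact (HX X HXH).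
      * split; auto. eapply subseq_sorted; [exact ltn_trans| |exact Hsort].
        rewrite eF -E1 -flatten_map_flatten. apply subseq_flatten. by apply map_f.
  - have -> : map (head 0) (map flatten HsG) = map (head 0) Es.
    { rewrite -E2 -!map_comp. apply eq_in_map => H HH /=. apply heads_eq.
      intros X HX. have [_ [HX' _]] := HHs H HH. exact (proj1 (HX' X HX)). }
    exact HM.
Qed.

Lemma choose_blocks (N P : seq nat -> Prop) (Gs : seq (seq nat)) :
  (forall G, G \in Gs -> G <> [::] /\ bracket' N P G) ->
  exists HsG : seq (seq (seq nat)), Gs = map flatten HsG /\
    forall H, H \in HsG -> (forall X, X \in H -> X <> [::] /\ P X) /\
                           N (map (head 0) H) /\ flatten H <> [::].
Proof.
  induction Gs as [|G Gs IH]; intro HG.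
  - exists [::]. split; [done|]. by [].
  - destruct IH as [HsG [E HH]]. { intros G' H'. apply HG. by rewrite inE H' orbT. }
    have [Hne [H [eG [HB [_ HN]]]]] := HG G (mem_head _ _).
    exists (H :: HsG). split; [by rewrite /= E eG|].
    intros H' H'in. rewrite inE in H'in. case/orP: H'in => [/eqP ->|H'in]; auto.
    split; auto. split; auto. by rewrite -eG.
Qed.

Lemma assoc2 (M N P : seq nat -> Prop) F :
  bracket' M (bracket' N P) F -> bracket' (bracket' M N) P F.
Proof.
  intros [Gs [eF [HB [Hsort HM]]]].
  destruct (choose_blocks HB) as [HsG [EG HH]].
  have HX : forall X, X \in flatten HsG -> X <> [::] /\ P X.
  { move=> X /flattenP [H Hin HXH]. exact (proj1 (HH H Hin) X HXH). }
  exists (flatten HsG). split; [by rewrite eF EG flatten_map_flatten|]. split; auto.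
  split; auto. exists (map (map (head 0)) HsG). split; [by rewrite map_flatten|].
  split; [|split].
  - intros E HE. case/mapP: HE => H Hin ->. have [HX' [HN Hne]] := HH H Hin.
    split; auto. destruct H; done.
  - eapply subseq_sorted; [exact ltn_trans| |exact Hsort].
    rewrite eF EG flatten_map_flatten. apply heads_subseq. intros X HXi. exact (proj1 (HX X HXi)).
  - have <- : map (head 0) (map flatten HsG) = map (head 0) (map (map (head 0)) HsG).
    { rewrite -!map_comp. apply eq_in_map => H Hin /=. apply heads_eq.
      intros X HXi. exact (proj1 (proj1 (HH H Hin) X HXi)). }
    by rewrite -EG.
Qed.
Lemma Sch_cases zeta a F : Sch zeta a F ->
  (oeq a OZ /\ S0 F) \/ (exists b, oeq a (OS b) /\ bracket S1 (Sch zeta b) F) \/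
  (exists n g, is_limit a /\ 0 < n /\ (forall x, x \in F -> n <= x) /\
     hat zeta a n g /\ Sch zeta g F).
Proof. intro H; destruct H; [left|right; left|right; right]; eauto 10. Qed.

Lemma OS_inj a b : oeq (OS a) (OS b) -> oeq a b.
Proof. intros [H1 H2]. split; apply olt_S_inv; apply ole_S_inv; auto. Qed.

Lemma succ_shift X al b : ~ oeq al OZ -> oeq (oadd X al) (OS b) ->
  exists b', oeq al (OS b') /\ oeq b (oadd X b').
Proof.
  intros H0 E.
  have Hp : olt OZ al.
  { apply not_ole. intro H. apply H0. split; auto. constructor. }
  have HX : olt X (OS b).
  { rewrite -E. change X with (oadd X OZ) at 1. apply add_smono. exact Hp. }
  destruct (sub_exists (olt_S_inv HX)) as [d Hd].
  exists d. split.
  - apply (@add_cancel X). rewrite E /= Hd. reflexivity.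
  - symmetry. exact Hd.
Qed.

Lemma limit_shift X al : ~ oeq al OZ -> (is_limit (oadd X al) <-> is_limit al).
Proof.
  intro H0. split.
  - intros [H1 H2]. split; auto. intros b Hb. apply (H2 (oadd X b)).
    rewrite Hb. reflexivity.
  - intros [H1 H2]. split.
    + intro H. apply H1. split; [|constructor]. rewrite -H. apply le_add_r.
    + intros b Hb. destruct (succ_shift H0 Hb) as [b' [Hb' _]]. exact (H2 b' Hb').
Qed.

Lemma head_le (A : seq nat) x : sorted ltn A -> x \in A -> head 0 A <= x.
Proof.
  destruct A as [|a A]; [done|]. move=> /= Hs. rewrite inE => /orP [/eqP ->|Hx]; [done|].
  have Hall := order_path_min ltn_trans Hs. apply ltnW. exact: (allP Hall x Hx).
Qed.

Lemma main zeta eta m : fundamental zeta -> 0 < m -> forall alpha,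
  olt alpha (wpow (OS eta)) -> forall F,
  bracket' (Sch zeta alpha) (Sch zeta (omuln (wpow eta) m)) F <->
  Sch zeta (oadd (omuln (wpow eta) m) alpha) F.
Proof.
  intros Hz Hm alpha. set X := omuln (wpow eta) m.
  induction alpha as [alpha IH] using (well_founded_ind wf_olt). intros Hlt.
  have IH' : forall b, olt b alpha -> forall F,
      bracket' (Sch zeta b) (Sch zeta X) F <-> Sch zeta (oadd X b) F.
  { intros b Hb. apply IH; auto. eapply olt_trans; eauto. }
  have HsX : forall A, Sch zeta X A -> sorted ltn A := fun A H => Sch_sorted H.
  intro F. split.
  - intros [Fs [eF [HB [Hsort HG]]]].
    destruct (Sch_cases HG) as [[H0 HS]|[[b [Hb HBr]]|[n [g' [Hl [Hn [Hx [Hh Hs]]]]]]]].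
    + destruct HS as [HS|[n [Hn HS]]].
      * destruct Fs; [|done]. rewrite eF. apply Sch_nil; auto.
      * destruct Fs as [|A [|B Fs]]; try done. rewrite eF /= cats0.
        have [_ HA] := HB A (mem_head _ _).
        eapply Sch_oeq; [|exact HA]. rewrite H0. reflexivity.
    + apply (@bracket_iff _ _ _ (fun A H => Sch_sorted H)) in HBr.
      have H1 : bracket' (bracket' S1 (Sch zeta b)) (Sch zeta X) F.
      { exists Fs. auto. }
      apply assoc1 in H1.
      have Hba : olt b alpha by rewrite Hb; apply olt_Sa.
      have H2 : bracket' S1 (Sch zeta (oadd X b)) F.
      { eapply bracket'_mono; [| intros G0 HG0; exact HG0| exact H1].
        intros A HA. apply (IH' b Hba). exact HA. }
      apply (@bracket_iff _ _ _ (fun A H => Sch_sorted H)) in H2.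
      eapply Sch_succ; [|exact H2]. rewrite Hb. reflexivity.
    + have Hga := hat_lt Hz Hn Hh.
      have H0 : ~ oeq alpha OZ by (destruct Hl; auto).
      apply (@Sch_lim zeta _ n (oadd X g')).
      * apply limit_shift; auto.
      * exact Hn.
      * intros x. rewrite eF => /flattenP [A HA Hxa].
        have [HAn HAs] := HB A HA.
        have Hh0 : n <= head 0 A by apply Hx; apply map_f.
        exact (leq_trans Hh0 (head_le (Sch_sorted HAs) Hxa)).
      * apply (hat_shift Hz Hm H0 Hlt). exists g'. split; auto. reflexivity.
      * apply (IH' g' Hga). exists Fs. auto.
  - intro H. destruct (classic (oeq alpha OZ)) as [H0|H0].
    + have HX : Sch zeta X F by (eapply Sch_oeq; [|exact H]; rewrite H0; reflexivity).
      destruct F as [|a F'].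
      * exists [::]. split; [done|]. split; [done|]. split; [done|].
        apply Sch_zero; auto. left; auto.
      * exists [:: a :: F']. split; [by rewrite /= cats0|]. split.
        { intros A HA. rewrite inE in HA. move/eqP: HA => ->. split; [done| exact HX]. }
        split; [exact (Sch_sorted HX)|].
        apply Sch_zero; auto. right. exists a. split; auto.
        have [_ Hp] := Sch_sp HX. by case/andP: Hp.
    + destruct (Sch_cases H) as [[HZ HS]|[[b [Hb HBr]]|[n [g [Hl [Hn [Hx [Hh Hs]]]]]]]].
      * exfalso. apply H0. split; [|constructor]. rewrite -HZ. apply le_add_r.
      * destruct (succ_shift H0 Hb) as [b' [Hb' Eb]].
        have Hba : olt b' alpha by rewrite Hb'; apply olt_Sa.
        apply (@bracket_iff _ _ _ (fun A H => Sch_sorted H)) in HBr.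
        have HBr2 : bracket' S1 (bracket' (Sch zeta b') (Sch zeta X)) F.
        { eapply bracket'_mono; [| intros G0 HG0; exact HG0| exact HBr].
          intros A HA. apply (IH' b' Hba). eapply Sch_oeq; [exact Eb| exact HA]. }
        apply assoc2 in HBr2.
        eapply bracket'_mono; [intros A HA; exact HA| |exact HBr2].
        intros G HG. apply (@bracket_iff _ _ _ (fun A H => Sch_sorted H)) in HG.
        eapply Sch_succ; [exact Hb'| exact HG].
      * apply (hat_shift Hz Hm H0 Hlt) in Hh. destruct Hh as [g' [Hh Hg]].
        have Hga := hat_lt Hz Hn Hh.
        have Hs' : Sch zeta (oadd X g') F by (eapply Sch_oeq; [exact Hg| exact Hs]).
        apply (IH' g' Hga) in Hs'. destruct Hs' as [Fs [eF [HB [Hsort HG]]]].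
        exists Fs. split; auto. split; auto. split; auto.
        apply (@Sch_lim zeta _ n g'); auto.
        -- apply (limit_shift X H0). exact Hl.
        -- move=> x /mapP [A HA ->]. apply Hx. rewrite eF. apply/flattenP.
           exists A; auto. have [HAn _] := HB A HA. destruct A; [done|]. apply mem_head.
Qed.

Unset Implicit Arguments.
Theorem lemma25 (zeta : bord -> nat -> bord) (alpha eta : bord) (m : nat) :
  fundamental zeta -> 0 < m ->
  (forall g, ell_is alpha g -> ole g eta) ->
  forall F : seq nat,
    bracket (Sch zeta alpha) (Sch zeta (omuln (wpow eta) m)) F <->
    Sch zeta (oadd (omuln (wpow eta) m) alpha) F.
Proof.
  intros Hz Hm Hell F.
  have Hlt := ell_bound Hell.
  rewrite (@bracket_iff _ _ _ (fun A H => Sch_sorted H)).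
  exact (main Hz Hm Hlt F).
Qed.
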